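(* Let $(a_j)_{j\ge1}$ be a bounded sequence of nonnegative integers. If there exists a positive integer $q$ such that $a_j\le a_{j+q}$ for all $j\geq1$, then $(a_j)_{j\ge1}$ is strongly eventually periodic.
   Context: A sequence $(a_j)_{j\ge1}$ of integers is strongly eventually periodic (SEP) if there exist a positive integer $p$, a finite sequence of integers $(b_\ell)_{\ell=1}^p$ and a finite sequence of nonnegative integers $(c_\ell)_{\ell=1}^p$ such that $(a_j)_{j\ge1}$ equals $b_1,\ldots,b_p$ followed by the infinite repetition of $b_1+c_1,\ldots,b_p+c_p$. *)

(* Defs.v *)
From Stdlib Require Import ZArith Lia.
Open Scope Z_scope.

(* A sequence (a_j)_{j>=1} of integers is represented by a : nat -> Z,
   only values at indices j >= 1 matter.  Finite sequences (b_l)_{l=1}^p and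
   (c_l)_{l=1}^p are represented by functions nat -> Z, read at l = 1..p. *)
Definition SEP (a : nat -> Z) : Prop :=
  exists (p : nat) (b c : nat -> Z),
    (0 < p)%nat /\
    (forall l : nat, (1 <= l <= p)%nat -> 0 <= c l) /\
    (forall l : nat, (1 <= l <= p)%nat -> a l = b l) /\
    (forall (k l : nat), (1 <= k)%nat -> (1 <= l <= p)%nat ->
        a (k * p + l)%nat = b l + c l).

(* Main.v *)
Require Import Defs.
From Stdlib Require Import ZArith.
From Stdlib Require Import Lia Classical.
Open Scope Z_scope.

Lemma stab_aux (M : Z) : forall n : nat, forall f : nat -> Z,
  (forall k, f k <= f (S k)) -> (forall k, f k <= M) -> (Z.to_nat (M - f 0%nat) <= n)%nat ->
  exists K, forall k, (K <= k)%nat -> f k = f K.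
Proof.
  induction n as [|n IH]; intros f Hmon Hb Hm.
  - exists 0%nat. intros k _.
    assert (Hm2 : forall k, f 0%nat <= f k).
    { induction k0; [lia|]. specialize (Hmon k0). lia. }
    specialize (Hm2 k). specialize (Hb k). lia.
  - destruct (classic (forall k, f k = f 0%nat)) as [H|H].
    + exists 0%nat. intros k _. apply H.
    + apply not_all_ex_not in H. destruct H as [k0 Hk0].
      assert (Hm2 : forall m k, f k <= f (m + k)%nat).
      { induction m; intros k; simpl; [lia|]. specialize (IHm k). specialize (Hmon (m+k)%nat). lia. }
      assert (f 0%nat < f k0) by (specialize (Hm2 k0 0%nat); rewrite Nat.add_0_r in Hm2; lia).
      destruct (IH (fun m => f (m + k0)%nat)) as [K HK].
      * intros k. simpl. apply Hmon.
      * intros k. apply Hb.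
      * simpl. specialize (Hb 0%nat). lia.
      * exists (K + k0)%nat. intros k Hk. specialize (HK (k - k0)%nat).
        replace (k - k0 + k0)%nat with k in HK by lia. apply HK. lia.
Qed.

Theorem lemma5p2 (a : nat -> Z)
  (hnonneg : forall j : nat, (1 <= j)%nat -> 0 <= a j)
  (hbdd : exists M : Z, forall j : nat, (1 <= j)%nat -> a j <= M)
  (hq : exists q : nat, (0 < q)%nat /\
          forall j : nat, (1 <= j)%nat -> a j <= a (j + q)%nat) :
  SEP a.
Proof.
  destruct hbdd as [M HM]. destruct hq as [q [Hq Hmon]].
  assert (Hmono : forall m j, (1 <= j)%nat -> a j <= a (j + m * q)%nat).
  { induction m; intros j Hj; simpl. rewrite Nat.add_0_r; lia.
    specialize (IHm j Hj). specialize (Hmon (j + m*q)%nat ltac:(lia)).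
    replace (j + (q + m*q))%nat with (j + m*q + q)%nat by lia. lia. }
  assert (Hr : forall r, (1 <= r)%nat -> exists K, forall k, (K <= k)%nat ->
            a (r + k*q)%nat = a (r + K*q)%nat).
  { intros r Hr. apply (stab_aux M (Z.to_nat (M - a (r + 0*q)%nat)) (fun k => a (r + k*q)%nat)).
    - intros k. simpl. specialize (Hmon (r + k*q)%nat ltac:(lia)).
      replace (r + (q + k*q))%nat with (r + k*q + q)%nat by lia. lia.
    - intros k. apply HM. lia.
    - lia. }
  assert (Hunif : forall n, exists K, forall r k, (1 <= r <= n)%nat -> (K <= k)%nat ->
            a (r + k*q)%nat = a (r + (S k)*q)%nat).
  { induction n as [|n IH].
    - exists 0%nat. intros; lia.
    - destruct IH as [K1 HK1]. destruct (Hr (S n) ltac:(lia)) as [K2 HK2].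
      exists (K1 + K2)%nat. intros r k Hrn Hk.
      destruct (Nat.eq_dec r (S n)) as [->|Hne].
      + rewrite (HK2 k) by lia. rewrite (HK2 (S k)) by lia. reflexivity.
      + apply HK1; lia. }
  destruct (Hunif q) as [K HK].
  set (N0 := (q * (K + 1) + 1)%nat).
  assert (Hper1 : forall j, (N0 <= j)%nat -> a (j + q)%nat = a j).
  { intros j Hj.
    set (r := ((j - 1) mod q + 1)%nat). set (k := ((j - 1) / q)%nat).
    assert (Hdm : (j - 1 = q * k + (j-1) mod q)%nat) by (apply Nat.div_mod; lia).
    assert (Hmq : ((j-1) mod q < q)%nat) by (apply Nat.mod_upper_bound; lia).
    assert (HkK : (K <= k)%nat).
    { destruct (Nat.le_gt_cases K k) as [?|Hlt]; [assumption|].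
      exfalso. assert (q * k <= q * (K - 1))%nat by (apply Nat.mul_le_mono_l; lia).
      unfold N0 in Hj. nia. }
    assert (Hj1 : j = (r + k * q)%nat) by (unfold r; lia).
    assert (Hj2 : (j + q)%nat = (r + S k * q)%nat) by (rewrite Hj1; simpl; lia).
    rewrite Hj2, Hj1. symmetry. apply HK; [unfold r; lia | exact HkK]. }
  assert (Hper : forall m j, (N0 <= j)%nat -> a (j + m * q)%nat = a j).
  { induction m; intros j Hj; simpl. rewrite Nat.add_0_r; lia.
    replace (j + (q + m*q))%nat with (j + m*q + q)%nat by lia.
    rewrite Hper1 by lia. apply IHm; lia. }
  exists (N0 * q)%nat, (fun l => a l), (fun l => a (N0 * q + l)%nat - a l).
  split; [unfold N0; nia|].
  split.
  { intros l Hl. specialize (Hmono N0 l ltac:(lia)).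
    replace (l + N0 * q)%nat with (N0 * q + l)%nat in Hmono by lia. lia. }
  split; [reflexivity|].
  intros k l Hk Hl. destruct k as [|k']; [lia|].
  replace (S k' * (N0 * q) + l)%nat with ((N0 * q + l) + (k' * N0) * q)%nat by nia.
  rewrite Hper by nia. lia.
Qed.
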